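(* Let $T>0$, $F:\mathbb{R}\times\mathbb{R}^n\rightrightarrows\mathbb{R}^n$ a set-valued mapping, $G_t(x):=F(t,x)$ for $t\in[0,T]$, $x\in\mathbb{R}^n$, and $x:[0,T]\to\mathbb{R}^n$ a mapping. Assume that for each $\varepsilon>0$ there is $\beta>0$ such that for each $t\in[0,T]$, each $(u,y)\in(B[x(t),\beta]\times B[0,\beta])\cap\operatorname{gph}G_t$ and each $(y^*,x^* )\in\operatorname{gph}D^*G_t(u,y)$, $$|\langle x^*,u-x(t)\rangle-\langle y^*,y\rangle|\le\varepsilon\|(x^*,y^* )\|\,\|(u,y)-(x(t),0)\|.$$ Then for each $\varepsilon>0$ there is $\beta>0$ such that for each $t\in[0,T]$, each $(u,y)\in(B[x(t),\beta]\times B[0,\beta])\cap\operatorname{gph}G_t$ and each $(A,B)\in\mathcal{A}_{\mathrm{reg}}G_t(u,y)$, $$\|u-A^{-1}By-x(t)\|\le\varepsilon\,\|A^{-1}\|\,\|(A\mid B)\|_F\,\|(u,y)-(x(t),0)\|.$$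
   Context: Euclidean norm on $\mathbb{R}^n$, max-norm on products, $\|A^{-1}\|$ the induced operator norm, $\|\cdot\|_F$ the Frobenius norm, $(A\mid B)$ horizontal concatenation; $B[z,r]$ closed ball. Limiting coderivative: $\operatorname{gph}D^*G(x,y)=\{(y^*,x^* ):(x^*,-y^* )\in N_{\operatorname{gph}G}(x,y)\}$, $N$ the limiting normal cone. For $G:\mathbb{R}^n\rightrightarrows\mathbb{R}^n$ and $(x,y)\in\operatorname{gph}G$, $\mathcal{A}_{\mathrm{reg}}G(x,y)$ is the set of pairs $(A,B)$ of $n\times n$ matrices such that $A$ is invertible and $((B)_i^T,(A)_i^T)\in\operatorname{gph}D^*G(x,y)$ for each $i=1,\dots,n$, where $(M)_i$ denotes the $i$-th row of $M$. *)

(* Defs.v *)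
From HB Require Import structures.
From mathcomp Require Import all_boot all_order all_algebra.
From mathcomp Require Import boolp classical_sets reals.
Set Implicit Arguments. Unset Strict Implicit. Unset Printing Implicit Defensive.
Import Order.TTheory GRing.Theory Num.Theory.
Local Open Scope ring_scope.
Local Open Scope classical_set_scope.

Section Defs.
Variables (R : realType) (n : nat).
Notation vec := 'cV[R]_n.

Definition vdot (a b : vec) : R := \sum_(i < n) a i 0 * b i 0.
Definition enorm (a : vec) : R := Num.sqrt (vdot a a).

Definition pnorm (a b : vec) : R := Num.max (enorm a) (enorm b).

Definition opnorm (M : 'M[R]_n) : R :=
  sup [set enorm (M *m v) | v in [set v : vec | enorm v <= 1]].

Definition frob m (M : 'M[R]_(n, m)) : R :=
  Num.sqrt (\sum_(i < n) \sum_(j < m) M i j ^+ 2).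

Definition pdist (w z : vec * vec) : R := pnorm (w.1 - z.1) (w.2 - z.2).
Definition pdot (v w : vec * vec) : R := vdot v.1 w.1 + vdot v.2 w.2.

Definition frechet_normal (Om : set (vec * vec)) (z v : vec * vec) : Prop :=
  Om z /\
  forall eps : R, 0 < eps -> exists delta : R, 0 < delta /\
    forall w, Om w -> pdist w z <= delta ->
      pdot v (w.1 - z.1, w.2 - z.2) <= eps * pdist w z.

Definition pcvg (s : nat -> vec * vec) (l : vec * vec) : Prop :=
  forall eps : R, 0 < eps -> exists N : nat, forall k : nat, (N <= k)%N ->
    pdist (s k) l <= eps.

Definition limiting_normal (Om : set (vec * vec)) (z v : vec * vec) : Prop :=
  Om z /\
  exists (zs vs : nat -> vec * vec),
    (forall k, frechet_normal Om (zs k) (vs k)) /\ pcvg zs z /\ pcvg vs v.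

Definition gph (G : vec -> set vec) : set (vec * vec) := [set p | G p.1 p.2].

(* graph of the limiting coderivative: (ys, xs) with (xs, -ys) in N_gph G(x,y) *)
Definition coderiv_gph (G : vec -> set vec) (x y : vec) : set (vec * vec) :=
  [set p | limiting_normal (gph G) (x, y) (p.2, - p.1)].

Definition Areg (G : vec -> set vec) (x y : vec) : set ('M[R]_n * 'M[R]_n) :=
  [set AB | AB.1 \in unitmx /\
     forall i : 'I_n, coderiv_gph G x y ((row i AB.2)^T, (row i AB.1)^T)].
End Defs.

(* Main.v *)
Set Warnings "-notation-overridden,-ambiguous-paths".
Set Implicit Arguments. Unset Strict Implicit.
Require Import Defs.
From HB Require Import structures.
From mathcomp Require Import all_boot all_order all_algebra.
From mathcomp Require Import boolp classical_sets reals.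
From mathcomp Require Import ring lra.
Import Order.TTheory GRing.Theory Num.Theory.
Local Open Scope ring_scope.

Section H.
Variables (R : realType) (n : nat).
Notation vec := 'cV[R]_n.

Lemma vdot_ge0 (a : vec) : 0 <= vdot a a.
Proof. by rewrite /vdot; apply: sumr_ge0 => i _; rewrite -expr2 sqr_ge0. Qed.

Lemma enorm_ge0 (a : vec) : 0 <= enorm a.
Proof. exact: sqrtr_ge0. Qed.

Lemma enorm_sq (a : vec) : enorm a ^+ 2 = vdot a a.
Proof. by rewrite /enorm sqr_sqrtr // vdot_ge0. Qed.

Lemma enorm0_eq (a : vec) : enorm a = 0 -> a = 0.
Proof.
move=> h; have : vdot a a = 0 by rewrite -enorm_sq h expr0n.
rewrite /vdot => /eqP; rewrite psumr_eq0; last by move=> i _; rewrite -expr2 sqr_ge0.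
move=> /allP H; apply/matrixP => i j; rewrite (ord1 j) mxE.
have := H i (mem_index_enum _); rewrite -expr2 sqrf_eq0 => /eqP //.
Qed.

Lemma enormZ (c : R) (a : vec) : enorm (c *: a) = `|c| * enorm a.
Proof.
rewrite /enorm /vdot.
have -> : \sum_(i < n) (c *: a) i 0 * (c *: a) i 0 = c ^+ 2 * \sum_(i < n) a i 0 * a i 0.
  by rewrite mulr_sumr; apply: eq_bigr => i _; rewrite !mxE; ring.
by rewrite sqrtrM ?sqr_ge0 // sqrtr_sqr.
Qed.

Lemma comp_bound (M : 'M[R]_n) (w : vec) (i : 'I_n) : enorm w <= 1 ->
  `|(M *m w) i 0| <= \sum_(j < n) `|M i j|.
Proof.
move=> hw; rewrite mxE; apply: le_trans (ler_norm_sum _ _ _) _.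
apply: ler_sum => j _; rewrite normrM -[X in _ <= X]mulr1 ler_wpM2l //.
have hj : `|w j 0| ^+ 2 <= 1.
  have : vdot w w <= 1 by rewrite -enorm_sq exprn_ile1 // enorm_ge0.
  apply: le_trans; rewrite /vdot (bigD1 j) //= real_normK ?num_real // expr2 lerDl.
  by apply: sumr_ge0 => k _; rewrite -expr2 sqr_ge0.
by rewrite expr_le1 in hj.
Qed.

Lemma opnorm_bound (M : 'M[R]_n) :
  has_ubound [set enorm (M *m v) | v in [set v : vec | enorm v <= 1]].
Proof.
exists (Num.sqrt (\sum_(i < n) (\sum_(j < n) `|M i j|) ^+ 2)).
move=> _ [v /= hv <-]; rewrite /enorm ler_sqrt; last first.
  by apply: sumr_ge0 => i _; rewrite sqr_ge0.
apply: ler_sum => i _; rewrite -expr2 -real_normK ?num_real //.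
rewrite lerXn2r ?nnegrE ?sumr_ge0 //; first exact: comp_bound.
Qed.

Lemma opnorm_ge0 (M : 'M[R]_n) : 0 <= opnorm M.
Proof.
have := ub_le_sup (opnorm_bound M); apply.
exists 0; last by rewrite mulmx0 /enorm /vdot big1 ?sqrtr0 // => i _; rewrite mxE mul0r.
by rewrite /= /enorm /vdot big1 ?sqrtr0 // => i _; rewrite mxE mul0r.
Qed.

Lemma opnormP (M : 'M[R]_n) (v : vec) : enorm (M *m v) <= opnorm M * enorm v.
Proof.
have [h0|hpos] := eqVneq (enorm v) 0.
  by rewrite h0 (enorm0_eq h0) mulmx0 mulr0 /enorm /vdot big1 ?sqrtr0 // => i _; rewrite mxE mul0r.
have hp : 0 < enorm v by rewrite lt_def hpos enorm_ge0.
have H : enorm (M *m ((enorm v)^-1 *: v)) <= opnorm M.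
  apply: (ub_le_sup (opnorm_bound M)); exists ((enorm v)^-1 *: v) => //=.
  by rewrite enormZ ger0_norm ?invr_ge0 ?enorm_ge0 // mulVf.
move: H; rewrite -scalemxAr enormZ ger0_norm ?invr_ge0 ?enorm_ge0 //.
by rewrite mulrC ler_pdivrMr.
Qed.

Lemma row_vdot (A : 'M[R]_n) i (w : vec) : vdot (row i A)^T w = (A *m w) i 0.
Proof. by rewrite /vdot mxE; apply: eq_bigr => j _; rewrite !mxE. Qed.

Lemma pnorm_ge0 (a b : vec) : 0 <= pnorm a b.
Proof. by rewrite /pnorm le_max enorm_ge0. Qed.

Lemma pnorm_sq (a b : vec) : pnorm a b ^+ 2 <= vdot a a + vdot b b.
Proof.
rewrite -!enorm_sq /pnorm; case: (leP (enorm a) (enorm b)) => _.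
  by rewrite lerDr sqr_ge0.
by rewrite lerDl sqr_ge0.
Qed.

Lemma frob_sq (A B : 'M[R]_n) :
  frob (row_mx A B) ^+ 2 = \sum_(i < n) (vdot (row i A)^T (row i A)^T + vdot (row i B)^T (row i B)^T).
Proof.
rewrite /frob sqr_sqrtr; last by apply: sumr_ge0 => i _; apply: sumr_ge0 => j _; rewrite sqr_ge0.
apply: eq_bigr => i _; rewrite big_split_ord /=; congr (_ + _); apply: eq_bigr => j _.
  by rewrite row_mxEl !mxE expr2.
by rewrite row_mxEr !mxE expr2.
Qed.
End H.

Theorem lemma5p1 (R : realType) (n : nat) (T : R) (hT : 0 < T)
  (F : R -> 'cV[R]_n -> set 'cV[R]_n) (x : R -> 'cV[R]_n) :
  (forall eps : R, 0 < eps -> exists beta : R, 0 < beta /\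
     forall t : R, 0 <= t <= T ->
     forall u y : 'cV[R]_n,
       enorm (u - x t) <= beta -> enorm y <= beta -> F t u y ->
     forall ys xs : 'cV[R]_n, coderiv_gph (F t) u y (ys, xs) ->
       `|vdot xs (u - x t) - vdot ys y| <= eps * pnorm xs ys * pnorm (u - x t) y) ->
  forall eps : R, 0 < eps -> exists beta : R, 0 < beta /\
     forall t : R, 0 <= t <= T ->
     forall u y : 'cV[R]_n,
       enorm (u - x t) <= beta -> enorm y <= beta -> F t u y ->
     forall A B : 'M[R]_n, Areg (F t) u y (A, B) ->
       enorm (u - invmx A *m B *m y - x t)
         <= eps * opnorm (invmx A) * frob (row_mx A B) * pnorm (u - x t) y.
Proof.
move=> hyp eps heps; have [beta [hb H]] := hyp eps heps.
exists beta; split => // t ht u y hu hy hF A B [/= hA hrows].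
set d := pnorm (u - x t) y.
set v := A *m (u - x t) - B *m y.
have hd : 0 <= d by exact: pnorm_ge0.
have he := ltW heps.
have hf : 0 <= frob (row_mx A B) by exact: sqrtr_ge0.
have hvi : forall i, `|v i 0| <= eps * pnorm (row i A)^T (row i B)^T * d.
  move=> i; have := H t ht u y hu hy hF _ _ (hrows i).
  by rewrite !row_vdot /v !mxE.
have hv : enorm v <= eps * frob (row_mx A B) * d.
  rewrite -(ler_pXn2r (n:=2%N)) // ?nnegrE ?enorm_ge0 ?mulr_ge0 //.
  rewrite enorm_sq !exprMn frob_sq -mulrA [_ * d ^+ 2]mulrC mulrA mulr_sumr [vdot v v]/vdot; apply: ler_sum => i _.
  rewrite -expr2 -real_normK ?num_real //.
  apply: le_trans (_ : (eps * pnorm (row i A)^T (row i B)^T * d) ^+ 2 <= _).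
    by rewrite lerXn2r ?nnegrE ?mulr_ge0 ?pnorm_ge0.
  rewrite !exprMn -mulrA [_ * d ^+ 2]mulrC mulrA ler_wpM2l ?mulr_ge0 ?sqr_ge0 //.
  exact: pnorm_sq.
have -> : u - invmx A *m B *m y - x t = invmx A *m v.
  by rewrite /v mulmxBr mulKmx // mulmxA; apply/matrixP => i j; rewrite !mxE; lra.
apply: le_trans (opnormP _ _) _.
rewrite -!mulrA [eps * _]mulrC -!mulrA ler_wpM2l ?opnorm_ge0 // mulrA.
by rewrite mulrC mulrA.
Qed.
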